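(* Let $k\ge 1$ and let $G$ be a $k$-symmetric graph on $n>k$ vertices. Then $2^{\binom{k}{2}}$ divides $\binom{n}{k}$.
   Context: All graphs are finite and simple. For a graph $G$ on $n$ vertices and a graph $H$ on $k$ vertices, the density $t(H,G)$ is the number of $k$-element subsets $S\subseteq V(G)$ whose induced subgraph $G[S]$ is isomorphic to $H$, divided by $\binom{n}{k}$ (and $t(H,G)=0$ if $n<k$). A graph $G$ with $n\ge k$ vertices is called $k$-symmetric if for every graph $H$ on $k$ vertices, $t(H,G)$ equals the probability that the uniformly random labelled graph on vertex set $\{1,\dots,k\}$ (each of the $\binom{k}{2}$ possible edges present independently with probability $1/2$) is isomorphic to $H$; graphs with fewer than $k$ vertices are considered trivially $k$-symmetric. *)

(* Defs.v *)
From HB Require Import structures.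
From mathcomp Require Import all_boot all_order all_algebra all_fingroup.
Set Implicit Arguments. Unset Strict Implicit. Unset Printing Implicit Defensive.
Import GRing.Theory Num.Theory.

(* A simple graph G on a finite vertex type T is given by an edge relation
   e : rel T, assumed symmetric and irreflexive. *)

Definition is_lgraph (k : nat) (g : {ffun 'I_k * 'I_k -> bool}) : bool :=
  [forall i, ~~ g (i, i)] && [forall i, forall j, g (i, j) == g (j, i)].

Definition lgraph_iso (k : nat) (g h : {ffun 'I_k * 'I_k -> bool}) : bool :=
  [exists s : {perm 'I_k}, [forall i, forall j, g (i, j) == h (s i, s j)]].

Definition induced_iso (T : finType) (e : rel T) (S : {set T}) (k : nat)
    (g : {ffun 'I_k * 'I_k -> bool}) : bool :=
  [exists f : {ffun 'I_k -> T},
     [&& injectiveb f, f @: [set: 'I_k] == S &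
         [forall i, forall j, e (f i) (f j) == g (i, j)]]].

Definition density (T : finType) (e : rel T) (k : nat)
    (g : {ffun 'I_k * 'I_k -> bool}) : rat :=
  if #|T| < k then 0%R
  else (#|[set S : {set T} | (#|S| == k) && induced_iso e S g]|%:R
        / ('C(#|T|, k))%:R)%R.

(* probability that the uniform random labelled graph G(k,1/2) on 'I_k is
   isomorphic to g: each labelled graph has probability 2^-(k choose 2). *)
Definition rand_prob (k : nat) (g : {ffun 'I_k * 'I_k -> bool}) : rat :=
  (#|[set h : {ffun 'I_k * 'I_k -> bool} | is_lgraph h && lgraph_iso h g]|%:R
   / (2 ^ 'C(k, 2))%:R)%R.

Definition k_symmetric (T : finType) (e : rel T) (k : nat) : Prop :=
  #|T| < k \/
  forall g : {ffun 'I_k * 'I_k -> bool}, is_lgraph g -> density e g = rand_prob g.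

(* Main.v *)
Require Import Defs.
From mathcomp Require Import all_boot all_order all_algebra all_fingroup.
Import GRing.Theory Num.Theory.

Theorem mainTheorem4 (T : finType) (e : rel T) (e_sym : symmetric e)
    (e_irr : irreflexive e) (k : nat) (hk : 1 <= k) (hn : k < #|T|)
    (hsym : k_symmetric e k) :
  2 ^ 'C(k, 2) %| 'C(#|T|, k).
Proof.
pose g : {ffun 'I_k * 'I_k -> bool} := [ffun p => p.1 != p.2].
have gl : is_lgraph g.
  rewrite /is_lgraph; apply/andP; split; apply/forallP => i; rewrite ?ffunE /= ?eqxx //.
  by apply/forallP => j; rewrite /g !ffunE /= (eq_sym i j).
have card1 : #|[set h : {ffun 'I_k * 'I_k -> bool} | is_lgraph h && lgraph_iso h g]| = 1%N.
  apply/eqP/cards1P; exists g; apply/setP => h; rewrite !inE.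
  apply/idP/idP.
    case/andP => _ /existsP [s /forallP Hs]; apply/eqP/ffunP => [[i j]].
    have := forallP (Hs i) j; rewrite /g !ffunE /= (inj_eq (@perm_inj _ s)).
    by move/eqP.
  move/eqP => ->; rewrite gl /=; apply/existsP; exists 1%g.
  by apply/forallP => i; apply/forallP => j; rewrite !perm1.
case: hsym => [|H]; first by rewrite ltnNge ltnW.
have := H g gl; rewrite /density /rand_prob card1 ltnNge ltnW //=.
set N := #|[set S | _ & _]|.
have Cn : (('C(#|T|, k))%:R != 0 :> rat)%R by rewrite pnatr_eq0 -lt0n bin_gt0 ltnW.
have Pn : ((2 ^ 'C(k, 2))%:R != 0 :> rat)%R by rewrite pnatr_eq0 expn_eq0.
move=> E.
have E2 : (('C(#|T|, k))%:R = (N * 2 ^ 'C(k, 2))%:R :> rat)%R.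
  rewrite natrM.
  have := congr1 (fun z => z * ('C(#|T|, k))%:R * (2 ^ 'C(k, 2))%:R)%R E.
  move=> /= F; rewrite mulfVK // mulrAC mulfVK // mul1r in F.
  by rewrite F.
move/eqP: E2; rewrite eqr_nat => /eqP ->.
exact: dvdn_mull.
Qed.
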